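(* Let $f:\{0,1\}^n\to\{0,1\}$ and let $\ell$ be a positive integer. The fraction of vertices of $\{0,1\}^n$ that are non-$\ell$-sticky (with respect to $f$) is at most $\frac{2\ell\cdot\mathbf{I}(f)}{n}$.
   Context: $H_n$ is the undirected hypercube graph on $\{0,1\}^n$ (edges between points at Hamming distance $1$); a random walk step moves to a uniformly random neighbor. An edge $(x,y)$ is influential if $f(x)\ne f(y)$. The total influence is $\mathbf{I}(f)=n\cdot\Pr[f(x)\neq f(y)]$ for a uniformly random edge $(x,y)$ of $H_n$. A vertex $x$ is $\ell$-sticky if an $\ell$-step random walk on $H_n$ starting from $x$ traverses no influential edge with probability at least $1/2$; otherwise $x$ is non-$\ell$-sticky. *)

(* Defs.v *)
From mathcomp Require Import all_boot all_order all_algebra.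
Set Implicit Arguments. Unset Strict Implicit. Unset Printing Implicit Defensive.
Import Order.TTheory GRing.Theory Num.Theory.
Local Open Scope ring_scope.

Definition cube (n : nat) := {ffun 'I_n -> bool}.

Definition flip n (x : cube n) (i : 'I_n) : cube n :=
  [ffun j => if j == i then ~~ x j else x j].

(* total influence: n * Pr[f x <> f y] for a uniformly random edge (x,y).
   A uniform edge is sampled as a uniform vertex x and uniform direction i,
   the edge being {x, flip x i} (each undirected edge arises exactly twice). *)
Definition total_influence n (f : cube n -> bool) : rat :=
  n%:R * (#|[set p : cube n * 'I_n | f p.1 != f (flip p.1 p.2)]|%:R
           / (2 ^ n * n)%:R).

Fixpoint avoids n (f : cube n -> bool) (x : cube n) (s : seq 'I_n) : bool :=
  if s is i :: s' then (f x == f (flip x i)) && avoids f (flip x i) s'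
  else true.

(* probability that an l-step random walk from x crosses no influential edge:
   the l steps are i.i.d. uniform directions in 'I_n *)
Definition stay_prob n (f : cube n -> bool) (l : nat) (x : cube n) : rat :=
  #|[set s : l.-tuple 'I_n | avoids f x s]|%:R / (n ^ l)%:R.

Definition sticky n (f : cube n -> bool) (l : nat) (x : cube n) : bool :=
  1 / 2 <= stay_prob f l x.

(* Main.v *)
Require Import Defs.
From mathcomp Require Import all_boot all_order all_algebra.
From mathcomp Require Import zify ring lra.
Import Order.TTheory GRing.Theory Num.Theory.
Set Implicit Arguments. Unset Strict Implicit.

Lemma big_tuple_cons (T: finType) m (G : m.+1.-tuple T -> nat) :
  \sum_(t : m.+1.-tuple T) G t = \sum_(i : T) \sum_(s : m.-tuple T) G [tuple of i :: s].
Proof.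
rewrite pair_big /=.
rewrite (reindex (fun p : T * m.-tuple T => [tuple of p.1 :: p.2])) //=.
exists (fun t => (thead t, [tuple of behead t])).
- by move=> [i s] _ /=; rewrite theadE; congr pair; apply/val_inj.
- by move=> t _; apply/val_inj; case: t => [[|a s] //= _].
Qed.

Lemma flipK n (i : 'I_n) : involutive (fun x => flip x i).
Proof. by move=> x; apply/ffunP => j; rewrite !ffunE; case: eqP => // _; rewrite negbK. Qed.

Section S.
Variables (n : nat) (f : cube n -> bool).
Definition cc i := #|[set x : cube n | f x != f (flip x i)]|.
Definition gg s := #|[set x : cube n | ~~ avoids f x s]|.

Lemma gg_cons i s : (gg (i :: s) <= cc i + gg s)%N.
Proof.
rewrite /gg /cc.
have -> : #|[set x : cube n | ~~ avoids f x s]| = #|[set x : cube n | ~~ avoids f (flip x i) s]|.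
  have -> : [set x : cube n | ~~ avoids f (flip x i) s] = (fun x => flip x i) @^-1: [set x : cube n | ~~ avoids f x s].
    by apply/setP => x; rewrite !inE.
  by rewrite card_preimset //; apply: inv_inj; apply: flipK.
apply: leq_trans (leq_card_setU _ _).
apply: subset_leq_card; apply/subsetP => x; rewrite !inE /= negb_and.
by case/orP => ->; rewrite ?orbT.
Qed.

Lemma gg_sum s : (gg s <= \sum_(i <- s) cc i)%N.
Proof.
elim: s => [|i s IH]; first by rewrite big_nil /gg leqn0 cards_eq0; apply/eqP/setP => x; rewrite !inE.
by rewrite big_cons; apply: leq_trans (gg_cons i s) _; rewrite leq_add2l.
Qed.

Definition BB := #|[set p : cube n * 'I_n | f p.1 != f (flip p.1 p.2)]|.

Lemma BB_sum : BB = \sum_i cc i.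
Proof.
rewrite /BB -(sum1dep_card (fun p : cube n * 'I_n => f p.1 != f (flip p.1 p.2))) /cc.
rewrite -(pair_big_dep xpredT (fun x i => f x != f (flip x i)) (fun _ _ => 1%N)) /=.
under eq_bigr => x _ do rewrite big_mkcond /=.
rewrite exchange_big /=.
apply eq_bigr => i _; rewrite -sum1dep_card [RHS]big_mkcond; by apply eq_bigr.
Qed.

Lemma FF l : ((\sum_(s : l.-tuple 'I_n) gg s) * n <= l * n ^ l * BB)%N.
Proof.
elim: l => [|l IH].
  rewrite mul0n leqn0 muln_eq0 big1 // => s _; apply/eqP; rewrite /gg cards_eq0; apply/eqP/setP => x; rewrite !inE; by case: s => [[|]].
rewrite big_tuple_cons.
apply: (@leq_trans ((\sum_(i : 'I_n) \sum_(s : l.-tuple 'I_n) (cc i + gg s)) * n)).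
  by rewrite leq_mul2r; apply/orP; right; apply: leq_sum => i _; apply: leq_sum => s _; apply: gg_cons.
under eq_bigr => i _ do rewrite big_split /= sum_nat_const card_tuple card_ord.
rewrite big_split /= -big_distrr /= -BB_sum sum_nat_const card_ord.
have H := leq_mul (leqnn n) IH.
rewrite expnS.
move: H; set G := (\sum_(s : l.-tuple 'I_n) gg s); set B := BB; set P := n ^ l.
nia.
Qed.
End S.

Lemma bad_ge n (f : cube n -> bool) l x : (0 < n)%N -> ~~ sticky f l x ->
  (n ^ l <= 2 * #|[set s : l.-tuple 'I_n | ~~ avoids f x s]|)%N.
Proof.
move=> n0; rewrite /sticky /stay_prob -ltNge.
have P0 : (0 < n ^ l)%N by rewrite expn_gt0 n0.
rewrite ltr_pdivrMr ?ltr0n //.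
have HC := cardsC [set s : l.-tuple 'I_n | avoids f x s].
have E : ~: [set s : l.-tuple 'I_n | avoids f x s] = [set s : l.-tuple 'I_n | ~~ avoids f x s].
  by apply/setP => s; rewrite !inE.
rewrite E card_tuple card_ord in HC.
move=> h.
have h2 : ((2 * #|[set s : l.-tuple 'I_n | avoids f x s]|)%:R < (n ^ l)%:R :> rat)%R.
  rewrite natrM; move: h; set a := (#|_|%:R : rat); set b := ((n ^ l)%:R : rat).
  move=> h; lra.
rewrite ltr_nat in h2.
lia.
Qed.

Lemma sum_bad n (f : cube n -> bool) l :
  \sum_(x : cube n) #|[set s : l.-tuple 'I_n | ~~ avoids f x s]| = \sum_(s : l.-tuple 'I_n) gg f s.
Proof.
rewrite /gg.
under eq_bigr => x _ do rewrite -sum1dep_card big_mkcond /=.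
rewrite exchange_big /=.
by apply eq_bigr => s _; rewrite -sum1dep_card [RHS]big_mkcond.
Qed.

Lemma main_aux (n : nat) (f : cube n -> bool) (l : nat) :
  (0 < n)%N -> (0 < l)%N ->
  (#|[set x : cube n | ~~ sticky f l x]|%:R / (2 ^ n)%:R
    <= 2 * l%:R * total_influence f / n%:R :> rat)%R.
Proof.
move=> n0 l0.
set N := #|_|.
have P0 : (0 < n ^ l)%N by rewrite expn_gt0 n0.
have H1 : (N * n ^ l <= 2 * \sum_(s : l.-tuple 'I_n) gg f s)%N.
  rewrite -sum_bad /N -sum1dep_card big_distrl /=.
  apply: (@leq_trans (\sum_(x | ~~ sticky f l x) 2 * #|[set s : l.-tuple 'I_n | ~~ avoids f x s]|)).
    by apply: leq_sum => x hx; rewrite mul1n; exact: bad_ge.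
  rewrite big_distrr /= [X in (_ <= X)%N](bigID (fun x => ~~ sticky f l x)) /=.
  exact: leq_addr.
have H2 := FF f l.
have H3 : (N * n <= 2 * l * BB f)%N.
  rewrite -(leq_pmul2r P0).
  have := leq_mul (leqnn 2) H2.
  move: H1; set G := (\sum_(s : l.-tuple 'I_n) gg f s); set P := n ^ l; set B := BB f.
  nia.
rewrite /total_influence -/(BB f).
have n0R : (n%:R : rat) != 0%R by rewrite pnatr_eq0 -lt0n.
have pR : ((2^n)%:R : rat) != 0%R by rewrite pnatr_eq0 expn_eq0.
have -> : (N%:R / (2 ^ n)%N%:R = (N * n)%:R / ((2^n)%N%:R * n%:R) :> rat)%R.
  by rewrite natrM; field; rewrite n0R pR.
have -> : (2 * l%:R * (n%:R * ((BB f)%:R / (2 ^ n * n)%N%:R)) / n%:R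
   = (2 * l * BB f)%N%:R / ((2^n)%N%:R * n%:R) :> rat)%R.
  by rewrite !natrM; field; rewrite n0R pR.
by apply: ler_wpM2r; [rewrite invr_ge0 -natrM ler0n | rewrite ler_nat].
Qed.

Local Open Scope ring_scope.

Theorem lemma3p4 (n : nat) (f : cube n -> bool) (l : nat) :
  (0 < n)%N -> (0 < l)%N ->
  #|[set x : cube n | ~~ sticky f l x]|%:R / (2 ^ n)%:R
    <= 2 * l%:R * total_influence f / n%:R :> rat.
Proof. exact: main_aux. Qed.
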